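(* For every $n\ge1$ and every choice of coefficients there exist real polynomials $\alpha,\beta,\gamma,\delta$ in $h$ with $\deg\alpha,\deg\delta\le[\frac{n-1}{2}]$, $\deg\beta\le[\frac{n-2}{2}]$, $\deg\gamma\le[\frac n2]$, and a real polynomial $\phi$ of degree at most $2n+\frac{3+(-1)^n}{2}$, such that for all $h\in(0,+\infty)$, $$M(h)=\alpha(h)I_{0,1}(h)+\beta(h)I_{1,1}(h)+\gamma(h)J_{0,0}(h)+\delta(h)J_{0,1}(h)+\phi\big(u(h)\big).$$ (Here a polynomial of negative degree bound is the zero polynomial.)
   Context: Fix an integer $n\ge 1$ and real coefficients $a^k_{i,j},b^k_{i,j}$ ($k=1,2,3,4$; $i+j\le n$), $f_k=\sum_{0\le i+j\le n}a^k_{i,j}x^iy^j$, $g_k=\sum_{0\le i+j\le n}b^k_{i,j}x^iy^j$. For $h>0$ let $u(h)=\sqrt{(\sqrt{1+4h}-1)/2}$ (so $u^4+u^2=h$), $\Gamma_h$ the circle $x^2+y^2=h$, and $A=(u,u^2)$, $B=(u,-u^2)$, $C=(-u,-u^2)$, $D=(-u,u^2)$. Let $\widehat{AB},\widehat{BC},\widehat{CD},\widehat{DA}$ be the arcs of $\Gamma_h$ traversed clockwise from $A$ to $B$ (through $(\sqrt h,0)$), $B$ to $C$ (through $(0,-\sqrt h)$), $C$ to $D$ (through $(-\sqrt h,0)$), $D$ to $A$ (through $(0,\sqrt h)$). Define $$M(h)=\int_{\widehat{AB}}g_1dx-f_1dy+\int_{\widehat{BC}}g_2dx-f_2dy+\int_{\widehat{CD}}g_3dx-f_3dy+\int_{\widehat{DA}}g_4dx-f_4dy.$$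 For integers $i,j\ge0$, $I_{i,j}(h)=\int_{\widehat{AB}}x^iy^jdx$, $J_{i,j}(h)=\int_{\widehat{BC}}x^iy^jdx$. $[p]$ is the integer part of $p$. *)

(* Defs.v *)
From Stdlib Require Import Reals Lra ZArith List Classical ClassicalEpsilon.
Open Scope R_scope.

(** The Riemann integral of f over [a,b] (a <= b intended): the common value of
    [RiemannInt pr] for every integrability proof [pr]; 0 if f is not integrable. *)
Lemma RI_ex (f : R -> R) (a b : R) :
  exists l : R, forall pr : Riemann_integrable f a b, RiemannInt pr = l.
Proof.
  destruct (classic (exists pr : Riemann_integrable f a b, True)) as [[pr0 _]|H].
  - exists (RiemannInt pr0). intro pr. apply RiemannInt_P5.
  - exists 0. intro pr. exfalso. apply H. exists pr. exact I.
Qed.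

Definition RI (f : R -> R) (a b : R) : R :=
  proj1_sig (constructive_indefinite_description _ (RI_ex f a b)).

Definition oint (f : R -> R) (a b : R) : R :=
  if Rle_dec a b then RI f a b else - RI f b a.

Definition poly2 (n : nat) (c : nat -> nat -> R) (x y : R) : R :=
  sum_f_R0 (fun i => sum_f_R0 (fun j => c i j * x ^ i * y ^ j) (n - i)) n.

(** Univariate polynomial given by its coefficient list (constant term first);
    a list of length <= d+1 represents a polynomial of degree <= d
    (the empty list is the zero polynomial). *)
Fixpoint peval (l : list R) (x : R) : R :=
  match l with
  | nil => 0
  | c :: l' => c + x * peval l' x
  end.

Definition deg_le (l : list R) (d : Z) : Prop :=
  (Z.of_nat (length l) <= d + 1)%Z.

Definition u (h : R) : R := sqrt ((sqrt (1 + 4 * h) - 1) / 2).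

(** With a := atan (u h), the points are
    A at angle a, B at -a, C at -PI + a, D at -PI - a (= PI - a mod 2PI),
    and A again at -2PI + a; clockwise traversal = decreasing angle. *)
Definition cx (h t : R) : R := sqrt h * cos t.
Definition cy (h t : R) : R := sqrt h * sin t.
Definition dcx (h t : R) : R := - (sqrt h * sin t).
Definition dcy (h t : R) : R := sqrt h * cos t.

Definition angA (h : R) : R := atan (u h).

Definition arc_int (P Q : R -> R -> R) (h t0 t1 : R) : R :=
  oint (fun t => P (cx h t) (cy h t) * dcx h t + Q (cx h t) (cy h t) * dcy h t) t0 t1.

Definition arcAB (h : R) := (angA h, - angA h).
Definition arcBC (h : R) := (- angA h, - PI + angA h).
Definition arcCD (h : R) := (- PI + angA h, - PI - angA h).
Definition arcDA (h : R) := (- PI - angA h, - 2 * PI + angA h).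

Definition on_arc (arc : R -> R * R) (P Q : R -> R -> R) (h : R) : R :=
  arc_int P Q h (fst (arc h)) (snd (arc h)).

(** M(h), with a k i j = a^k_{i,j} and b k i j = b^k_{i,j} (k = 1..4). *)
Definition M (n : nat) (a b : nat -> nat -> nat -> R) (h : R) : R :=
  let f k := poly2 n (a k) in
  let g k := poly2 n (b k) in
  let mf k := (fun x y => - f k x y) in
  on_arc arcAB (g 1%nat) (mf 1%nat) h + on_arc arcBC (g 2%nat) (mf 2%nat) h
  + on_arc arcCD (g 3%nat) (mf 3%nat) h + on_arc arcDA (g 4%nat) (mf 4%nat) h.

Definition zero2 : R -> R -> R := fun _ _ => 0.

Definition Iij (i j : nat) (h : R) : R :=
  on_arc arcAB (fun x y => x ^ i * y ^ j) zero2 h.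
Definition Jij (i j : nat) (h : R) : R :=
  on_arc arcBC (fun x y => x ^ i * y ^ j) zero2 h.

(* Main.v *)
Require Import Defs.
From Stdlib Require Import Reals ZArith List Lra Lia FunctionalExtensionality ClassicalEpsilon.
From Coquelicot Require Import Coquelicot.
Open Scope R_scope.

Lemma deriv_XY h a b t :
  is_derive (fun t => cx h t ^ a * cy h t ^ b) t
    (INR b * cx h t ^ (S a) * cy h t ^ (pred b) - INR a * cx h t ^ (pred a) * cy h t ^ (S b)).
Proof.
  unfold cx, cy. auto_derive; [auto|]. simpl. ring.
Qed.

Lemma cont_XY h a b t : continuous (fun t => cx h t ^ a * cy h t ^ b) t.
Proof. apply (@ex_derive_continuous R_AbsRing R_NormedModule). eexists. apply deriv_XY. Qed.

Lemma exR_XY h a b t0 t1 : ex_RInt (fun t => cx h t ^ a * cy h t ^ b) t0 t1.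
Proof. apply (@ex_RInt_continuous R_CompleteNormedModule). intros; apply cont_XY. Qed.

Lemma cont_lin h a b c d a' b' t :
  continuous (fun t => c * (cx h t ^ a * cy h t ^ b) + d * (cx h t ^ a' * cy h t ^ b')) t.
Proof.
  apply (continuous_plus (fun t => c * (cx h t ^ a * cy h t ^ b))
                         (fun t => d * (cx h t ^ a' * cy h t ^ b'))).
  - apply (continuous_scal_r c (fun t => cx h t ^ a * cy h t ^ b)). apply cont_XY.
  - apply (continuous_scal_r d (fun t => cx h t ^ a' * cy h t ^ b')). apply cont_XY.
Qed.

Lemma FTC_XY h a b t0 t1 :
  RInt (fun t => INR b * cx h t ^ (S a) * cy h t ^ (pred b) - INR a * cx h t ^ (pred a) * cy h t ^ (S b)) t0 t1
  = cx h t1 ^ a * cy h t1 ^ b - cx h t0 ^ a * cy h t0 ^ b.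
Proof.
  apply is_RInt_unique.
  apply (is_RInt_derive (fun t => cx h t ^ a * cy h t ^ b)).
  - intros; apply deriv_XY.
  - intros. apply (@ex_derive_continuous R_AbsRing R_NormedModule).
    unfold cx, cy. auto_derive. auto.
Qed.

Lemma circ h t : 0 <= h -> cx h t ^ 2 + cy h t ^ 2 = h.
Proof.
  intro H. unfold cx, cy. replace ((sqrt h * cos t) ^ 2 + (sqrt h * sin t) ^ 2)
   with (sqrt h * sqrt h * (sin t ^ 2 + cos t ^ 2)) by ring.
  rewrite sqrt_sqrt by lra. pose proof (sin2_cos2 t) as S. unfold Rsqr in S.
  replace (sin t ^2 + cos t^2) with 1 by (rewrite <- S; ring). ring.
Qed.

Definition K (t0 t1 : R -> R) (p q : nat) (h : R) : R :=
  RInt (fun t => cx h t ^ p * cy h t ^ q) (t0 h) (t1 h).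

Definition E (t0 t1 : R -> R) (a b : nat) (h : R) : R :=
  cx h (t1 h) ^ a * cy h (t1 h) ^ b - cx h (t0 h) ^ a * cy h (t0 h) ^ b.

Lemma RInt_lin2 (f g : R -> R) c d x y :
  ex_RInt f x y -> ex_RInt g x y ->
  RInt (fun t => c * f t + d * g t) x y = c * RInt f x y + d * RInt g x y.
Proof.
  intros Hf Hg.
  rewrite (RInt_plus (fun t => c * f t) (fun t => d * g t)).
  - rewrite (RInt_scal f) by auto. rewrite (RInt_scal g) by auto. reflexivity.
  - apply (ex_RInt_scal f); auto.
  - apply (ex_RInt_scal g); auto.
Qed.

Lemma K_rec1 t0 t1 r q h : 0 <= h ->
  K t0 t1 (S (S r)) q h =
   (E t0 t1 (S r) (S q) h + INR (S r) * h * K t0 t1 r q h) / INR (S (S r) + q).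
Proof.
  intro Hh.
  assert (Hne : INR (S (S r) + q) <> 0) by (apply not_0_INR; lia).
  assert (Heq : E t0 t1 (S r) (S q) h =
     INR (S (S r) + q) * K t0 t1 (S (S r)) q h + (- (INR (S r) * h)) * K t0 t1 r q h).
  { unfold E, K. rewrite <- FTC_XY. simpl pred.
    rewrite <- RInt_lin2 by apply exR_XY.
    apply RInt_ext. intros t _.
    pose proof (circ h t Hh) as C.
    rewrite plus_INR, !S_INR. simpl.
    set (X := cx h t) in *. set (Y := cy h t) in *. rewrite <- C. ring. }
  rewrite Heq. field. auto.
Qed.

Lemma K_rec2 t0 t1 p s h : 0 <= h ->
  K t0 t1 p (S (S s)) h =
   (INR (S s) * h * K t0 t1 p s h - E t0 t1 (S p) (S s) h) / INR (p + S (S s)).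
Proof.
  intro Hh.
  assert (Hne : INR (p + S (S s)) <> 0) by (apply not_0_INR; lia).
  assert (Heq : E t0 t1 (S p) (S s) h =
     (INR (S s) * h) * K t0 t1 p s h + (- INR (p + S (S s))) * K t0 t1 p (S (S s)) h).
  { unfold E, K. rewrite <- FTC_XY. simpl pred.
    rewrite <- RInt_lin2 by apply exR_XY.
    apply RInt_ext. intros t _.
    pose proof (circ h t Hh) as C.
    rewrite plus_INR, !S_INR. simpl.
    set (X := cx h t) in *. set (Y := cy h t) in *. rewrite <- C. ring. }
  rewrite Heq. field. auto.
Qed.

Lemma K10 t0 t1 h : K t0 t1 1 0 h = E t0 t1 0 1 h.
Proof.
  unfold E, K. rewrite <- FTC_XY. apply RInt_ext. intros. simpl. ring.
Qed.
Lemma K01 t0 t1 h : K t0 t1 0 1 h = - E t0 t1 1 0 h.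
Proof.
  unfold E, K. rewrite <- FTC_XY.
  replace (fun t => INR 0 * cx h t ^ 2 * cy h t ^ Init.Nat.pred 0 - INR 1 * cx h t ^ Init.Nat.pred 1 * cy h t ^ 1)
   with (fun t => (-1) * (cx h t ^ 0 * cy h t ^ 1) + 0 * (cx h t ^ 0 * cy h t ^ 1)).
  2:{ apply functional_extensionality. intros. simpl. ring. }
  rewrite RInt_lin2 by apply exR_XY. simpl; lra.
Qed.
Lemma K11 t0 t1 h : K t0 t1 1 1 h = E t0 t1 0 2 h / 2.
Proof.
  unfold E, K. rewrite <- FTC_XY.
  replace (fun t => INR 2 * cx h t ^ 1 * cy h t ^ Init.Nat.pred 2 - INR 0 * cx h t ^ Init.Nat.pred 0 * cy h t ^ 3)
   with (fun t => 2 * (cx h t ^ 1 * cy h t ^ 1) + 0 * (cx h t ^ 1 * cy h t ^ 1)).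
  2:{ apply functional_extensionality. intros. simpl. ring. }
  rewrite RInt_lin2 by apply exR_XY. simpl; lra.
Qed.
Lemma K00 t0 t1 h : K t0 t1 0 0 h = t1 h - t0 h.
Proof.
  unfold K. simpl. replace (fun _ : R => 1 * 1) with (fun _ : R => 1) by (apply functional_extensionality; intros; ring).
  rewrite RInt_const. unfold scal; simpl. unfold mult; simpl. ring.
Qed.


Lemma oint_RInt f a b : ex_RInt f a b -> oint f a b = RInt f a b.
Proof.
  intro H. unfold oint, RI.
  destruct (Rle_dec a b).
  - destruct (constructive_indefinite_description _ _) as [l Hl]. simpl.
    rewrite <- (Hl (ex_RInt_Reals_0 f a b H)). symmetry. apply RInt_Reals.
  - destruct (constructive_indefinite_description _ _) as [l Hl]. simpl.
    pose proof (ex_RInt_swap _ _ _ H) as H'.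
    rewrite <- (Hl (ex_RInt_Reals_0 f b a H')). rewrite <- (RInt_Reals f b a).
    rewrite <- (opp_RInt_swap f a b H). unfold opp; simpl; ring.
Qed.

Lemma RInt_sum (F : nat -> R -> R) N a b :
  (forall i, ex_RInt (F i) a b) ->
  ex_RInt (fun t => sum_f_R0 (fun i => F i t) N) a b /\
  RInt (fun t => sum_f_R0 (fun i => F i t) N) a b = sum_f_R0 (fun i => RInt (F i) a b) N.
Proof.
  intro H. induction N as [|N IH].
  - simpl. split; [apply H| reflexivity].
  - destruct IH as [IH1 IH2]. simpl. split.
    + apply (ex_RInt_plus (fun t => sum_f_R0 (fun i => F i t) N) (F (S N))); auto.
    + rewrite (RInt_plus (fun t => sum_f_R0 (fun i => F i t) N) (F (S N))); auto.
      rewrite IH2. reflexivity.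
Qed.

Lemma sum_lin (f g : nat -> R) N x y :
  (- sum_f_R0 f N) * x + (- sum_f_R0 g N) * y = sum_f_R0 (fun i => (- f i) * x + (- g i) * y) N.
Proof. induction N; simpl; [ring| rewrite <- IHN; ring]. Qed.

Definition term (c d : nat -> nat -> R) (i j : nat) (h t : R) :=
  (- c i j) * (cx h t ^ i * cy h t ^ (S j)) + (- d i j) * (cx h t ^ (S i) * cy h t ^ j).

Lemma ex_term c d i j h x y : ex_RInt (term c d i j h) x y.
Proof.
  apply (@ex_RInt_continuous R_CompleteNormedModule). intros. unfold term. apply cont_lin.
Qed.

Lemma on_arc_sum n (c d : nat -> nat -> R) (t0 t1 : R -> R) (arc : R -> R * R) h :
  (forall h, arc h = (t0 h, t1 h)) ->
  on_arc arc (poly2 n c) (fun x y => - poly2 n d x y) h =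
  sum_f_R0 (fun i => sum_f_R0 (fun j =>
     (- c i j) * K t0 t1 i (S j) h + (- d i j) * K t0 t1 (S i) j h) (n - i)) n.
Proof.
  intro Ha. unfold on_arc, arc_int. rewrite Ha. simpl fst. simpl snd.
  assert (Hf : (fun t => poly2 n c (cx h t) (cy h t) * dcx h t + - poly2 n d (cx h t) (cy h t) * dcy h t)
     = (fun t => sum_f_R0 (fun i => sum_f_R0 (fun j => term c d i j h t) (n - i)) n)).
  { apply functional_extensionality. intro t. unfold poly2, dcx, dcy.
    change (sqrt h * sin t) with (cy h t). change (sqrt h * cos t) with (cx h t).
    rewrite <- Ropp_mult_distr_r, Ropp_mult_distr_l.
    rewrite (sum_lin _ _ n). apply sum_eq. intros i _.
    rewrite (sum_lin _ _ (n - i)). apply sum_eq. intros j _. unfold term. simpl. ring. }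
  rewrite Hf.
  assert (Hex : forall i, ex_RInt (fun t => sum_f_R0 (fun j => term c d i j h t) (n - i)) (t0 h) (t1 h)).
  { intro i. apply (RInt_sum (fun j => term c d i j h)). intros; apply ex_term. }
  destruct (RInt_sum (fun i t => sum_f_R0 (fun j => term c d i j h t) (n - i)) n (t0 h) (t1 h) Hex) as [H1 H2].
  rewrite oint_RInt by exact H1. rewrite H2. apply sum_eq. intros i _.
  destruct (RInt_sum (fun j => term c d i j h) (n - i) (t0 h) (t1 h)) as [_ H3].
  { intros; apply ex_term. }
  rewrite H3. apply sum_eq. intros j _. unfold term, K.
  apply RInt_lin2; apply exR_XY.
Qed.


Fixpoint ladd (l1 l2 : list R) : list R :=
  match l1, l2 with
  | nil, _ => l2
  | _, nil => l1
  | a :: l1', b :: l2' => (a + b) :: ladd l1' l2'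
  end.

Lemma peval_ladd l1 l2 x : peval (ladd l1 l2) x = peval l1 x + peval l2 x.
Proof.
  revert l2; induction l1 as [|a l1 IH]; intros [|b l2]; simpl; try ring.
  rewrite IH. ring.
Qed.

Lemma length_ladd l1 l2 : length (ladd l1 l2) = Nat.max (length l1) (length l2).
Proof.
  revert l2; induction l1 as [|a l1 IH]; intros [|b l2]; simpl; auto.
Qed.

Definition lscal (c : R) (l : list R) := map (Rmult c) l.
Lemma peval_lscal c l x : peval (lscal c l) x = c * peval l x.
Proof. induction l; simpl; [ring| rewrite IHl; ring]. Qed.
Lemma length_lscal c l : length (lscal c l) = length l.
Proof. apply length_map. Qed.

Definition mono (c : R) (k : nat) : list R := repeat 0 k ++ (c :: nil).
Lemma peval_mono c k x : peval (mono c k) x = c * x ^ k.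
Proof. unfold mono. induction k; simpl; [ring| rewrite IHk; ring]. Qed.
Lemma length_mono c k : length (mono c k) = S k.
Proof. unfold mono. rewrite length_app, repeat_length. simpl. lia. Qed.

Definition Rep (da dp : Z) (F : R -> R) : Prop :=
  exists al de ph, deg_le al da /\ deg_le de da /\ deg_le ph dp /\
    forall h, 0 < h -> F h = peval al h * Iij 0 1 h + peval de h * Jij 0 1 h + peval ph (u h).

Lemma Rep_weak da dp da' dp' F : (da <= da')%Z -> (dp <= dp')%Z -> Rep da dp F -> Rep da' dp' F.
Proof.
  intros H1 H2 (al & de & ph & A1 & A2 & A3 & A4). exists al, de, ph.
  unfold deg_le in *. repeat split; try lia. auto.
Qed.

Lemma Rep_ext da dp F G : (forall h, 0 < h -> F h = G h) -> Rep da dp G -> Rep da dp F.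
Proof.
  intros H (al & de & ph & A1 & A2 & A3 & A4). exists al, de, ph.
  repeat split; auto. intros. rewrite H by auto. auto.
Qed.

Lemma deg_ladd l1 l2 d : deg_le l1 d -> deg_le l2 d -> deg_le (ladd l1 l2) d.
Proof. unfold deg_le. rewrite length_ladd. lia. Qed.
Lemma deg_lscal c l d : deg_le l d -> deg_le (lscal c l) d.
Proof. unfold deg_le. rewrite length_lscal. auto. Qed.

Lemma Rep_comb da dp F G c1 c2 : Rep da dp F -> Rep da dp G ->
  Rep da dp (fun h => c1 * F h + c2 * G h).
Proof.
  intros (al & de & ph & A1 & A2 & A3 & A4) (al' & de' & ph' & B1 & B2 & B3 & B4).
  exists (ladd (lscal c1 al) (lscal c2 al')), (ladd (lscal c1 de) (lscal c2 de')),
    (ladd (lscal c1 ph) (lscal c2 ph')).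
  repeat split; try (apply deg_ladd; apply deg_lscal; auto).
  intros h Hh. rewrite A4, B4 by auto. rewrite !peval_ladd, !peval_lscal. ring.
Qed.

Lemma Rep_zero da dp : (-1 <= da)%Z -> (-1 <= dp)%Z -> Rep da dp (fun _ => 0).
Proof.
  intros. exists nil, nil, nil. unfold deg_le; simpl. repeat split; try lia.
  intros. ring.
Qed.

Lemma Rep_add da dp F G : Rep da dp F -> Rep da dp G -> Rep da dp (fun h => F h + G h).
Proof.
  intros HF HG. apply (Rep_ext _ _ _ (fun h => 1 * F h + 1 * G h)).
  - intros; ring.
  - apply Rep_comb; auto.
Qed.

Lemma Rep_sum da dp (F : nat -> R -> R) N :
  (forall i, (i <= N)%nat -> Rep da dp (F i)) -> Rep da dp (fun h => sum_f_R0 (fun i => F i h) N).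
Proof.
  intro H. induction N.
  - simpl. apply H. lia.
  - simpl. apply (Rep_add _ _ (fun h => sum_f_R0 (fun i => F i h) N) (F (S N))).
    + apply IHN. intros; apply H; lia.
    + apply H; lia.
Qed.

Lemma Rep_mono da dp c k : (-1 <= da)%Z -> (Z.of_nat k <= dp)%Z -> Rep da dp (fun h => c * u h ^ k).
Proof.
  intros. exists nil, nil, (mono c k). unfold deg_le. rewrite length_mono. simpl length.
  repeat split; try lia. intros. rewrite peval_mono. simpl. ring.
Qed.

Lemma u_nonneg h : 0 <= u h.
Proof. unfold u. apply sqrt_pos. Qed.

Lemma u_sq h : 0 < h -> u h ^ 2 = (sqrt (1 + 4 * h) - 1) / 2.
Proof.
  intro Hh. unfold u. simpl. rewrite Rmult_1_r. rewrite sqrt_sqrt. auto.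
  assert (1 <= sqrt (1 + 4 * h)). { apply Rle_trans with (sqrt 1); [rewrite sqrt_1; lra| apply sqrt_le_1_alt; lra]. }
  lra.
Qed.

Lemma u_eq h : 0 < h -> u h ^ 4 + u h ^ 2 = h.
Proof.
  intro Hh. replace (u h ^ 4) with ((u h ^ 2) ^ 2) by ring. rewrite u_sq by auto.
  assert (S : sqrt (1 + 4 * h) * sqrt (1 + 4 * h) = 1 + 4 * h) by (apply sqrt_sqrt; lra).
  nra.
Qed.

Lemma Rep_mulh da dp F : Rep da dp F -> Rep (da + 1) (dp + 4) (fun h => h * F h).
Proof.
  intros (al & de & ph & A1 & A2 & A3 & A4).
  exists (0 :: al), (0 :: de), (ladd (0 :: 0 :: ph) (0 :: 0 :: 0 :: 0 :: ph)).
  unfold deg_le in *. rewrite length_ladd. simpl length. repeat split; try lia.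
  intros h Hh. rewrite A4 by auto. rewrite peval_ladd. simpl peval.
  pose proof (u_eq h Hh) as Hu.
  set (U := u h) in *. set (P := peval ph U). set (I := Iij 0 1 h). set (J := Jij 0 1 h).
  set (pa := peval al h). set (pd := peval de h).
  clearbody U P I J pa pd. subst h. ring.
Qed.


Definition bA (d : nat) : Z := ((Z.of_nat d - 2) / 2)%Z.
Definition bP (d : nat) : Z := (2 * Z.of_nat d - 1 + Z.of_nat d mod 2)%Z.

Lemma E_val (t0 t1 : R -> R) (sx0 sy0 sx1 sy1 : R) (He0 : forall h, 0 < h -> cx h (t0 h) = sx0 * u h /\ cy h (t0 h) = sy0 * u h ^ 2) (He1 : forall h, 0 < h -> cx h (t1 h) = sx1 * u h /\ cy h (t1 h) = sy1 * u h ^ 2) a b h : 0 < h ->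
  E t0 t1 a b h = (sx1 ^ a * sy1 ^ b - sx0 ^ a * sy0 ^ b) * u h ^ (a + 2 * b).
Proof.
  intro Hh. unfold E. destruct (He0 h Hh) as [-> ->]. destruct (He1 h Hh) as [-> ->].
  rewrite !Rpow_mult_distr, pow_add, pow_mult. ring.
Qed.

Lemma E_rep (t0 t1 : R -> R) (sx0 sy0 sx1 sy1 : R) (He0 : forall h, 0 < h -> cx h (t0 h) = sx0 * u h /\ cy h (t0 h) = sy0 * u h ^ 2) (He1 : forall h, 0 < h -> cx h (t1 h) = sx1 * u h /\ cy h (t1 h) = sy1 * u h ^ 2) a b da dp : (-1 <= da)%Z -> (Z.of_nat (a + 2 * b) <= dp)%Z ->
  Rep da dp (E t0 t1 a b).
Proof.
  intros. apply (Rep_ext _ _ _ (fun h => (sx1 ^ a * sy1 ^ b - sx0 ^ a * sy0 ^ b) * u h ^ (a + 2 * b))).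
  - intros; apply (E_val t0 t1 sx0 sy0 sx1 sy1 He0 He1); auto.
  - apply Rep_mono; auto.
Qed.

Lemma E_zero (t0 t1 : R -> R) (sx0 sy0 sx1 sy1 : R) (Hs : sx0 ^ 2 = 1 /\ sy0 ^ 2 = 1 /\ sx1 ^ 2 = 1 /\ sy1 ^ 2 = 1) (He0 : forall h, 0 < h -> cx h (t0 h) = sx0 * u h /\ cy h (t0 h) = sy0 * u h ^ 2) (He1 : forall h, 0 < h -> cx h (t1 h) = sx1 * u h /\ cy h (t1 h) = sy1 * u h ^ 2) k h : 0 < h -> E t0 t1 0 (2 * k) h = 0.
Proof.
  intro Hh. rewrite (E_val t0 t1 sx0 sy0 sx1 sy1 He0 He1) by auto. destruct Hs as (_ & H1 & _ & H2).
  rewrite !pow_mult, H1, H2. ring.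
Qed.

Ltac zl := unfold bA, bP in *; Z.to_euclidean_division_equations; lia.

Lemma h0_rep (t0 t1 : R -> R) (sx0 sy0 sx1 sy1 : R) (Hang : Rep 0 3 (fun h => h * (t1 h - t0 h))) : Rep (bA 2) (bP 2) (fun h => h * K t0 t1 0 0 h).
Proof.
  apply (Rep_ext _ _ _ (fun h => h * (t1 h - t0 h))).
  - intros; rewrite K00; auto.
  - apply (Rep_weak 0 3); auto; zl.
Qed.

Lemma K_rep (t0 t1 : R -> R) (sx0 sy0 sx1 sy1 : R) (Hs : sx0 ^ 2 = 1 /\ sy0 ^ 2 = 1 /\ sx1 ^ 2 = 1 /\ sy1 ^ 2 = 1) (He0 : forall h, 0 < h -> cx h (t0 h) = sx0 * u h /\ cy h (t0 h) = sy0 * u h ^ 2) (He1 : forall h, 0 < h -> cx h (t1 h) = sx1 * u h /\ cy h (t1 h) = sy1 * u h ^ 2) (Hang : Rep 0 3 (fun h => h * (t1 h - t0 h))) : forall d p q, (1 <= d)%nat -> (p + q = d)%nat -> Rep (bA d) (bP d) (K t0 t1 p q).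
Proof.
  intro d. induction d as [d IH] using lt_wf_ind. intros p q Hd Hpq.
  assert (Hh2 : forall p' q', (p' + q' + 2 = d)%nat -> Rep (bA d) (bP d) (fun h => h * K t0 t1 p' q' h)).
  { intros p' q' Hpq'. destruct (Nat.eq_dec (p' + q') 0) as [Z0|Z0].
    - assert (p' = 0%nat) by lia. assert (q' = 0%nat) by lia. subst p' q'.
      replace d with 2%nat by lia. apply (h0_rep t0 t1 sx0 sy0 sx1 sy1 Hang).
    - apply (Rep_weak (bA (p' + q') + 1) (bP (p' + q') + 4)); try zl.
      apply Rep_mulh. apply IH; lia. }
  assert (Hrec2 : forall p' s, (p' <= 1)%nat -> p = p' -> q = S (S s) -> Rep (bA d) (bP d) (K t0 t1 p q)).
  { intros p' s Hp' -> ->.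
    apply (Rep_ext _ _ _ (fun h => (/ INR d * INR (S s)) * (h * K t0 t1 p' s h)
                                    + (- / INR d) * E t0 t1 (S p') (S s) h)).
    { intros h Hh. rewrite K_rec2 by lra. subst d. field. apply not_0_INR; lia. }
    apply Rep_comb.
    - apply Hh2. lia.
    - apply (E_rep t0 t1 sx0 sy0 sx1 sy1 He0 He1); zl. }
  destruct p as [|[|r]].
  - destruct q as [|[|s]]; [lia| |].
    + apply (Rep_ext _ _ _ (fun h => (-1) * E t0 t1 1 0 h + 0 * 0)).
      { intros; rewrite K01; ring. }
      apply Rep_comb; [apply (E_rep t0 t1 sx0 sy0 sx1 sy1 He0 He1) | apply Rep_zero]; zl.
    + apply (Hrec2 0%nat s); auto.
  - destruct q as [|[|s]].
    + apply (Rep_ext _ _ _ (fun h => 1 * E t0 t1 0 1 h + 0 * 0)).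
      { intros; rewrite K10; ring. }
      apply Rep_comb; [apply (E_rep t0 t1 sx0 sy0 sx1 sy1 He0 He1) | apply Rep_zero]; zl.
    + apply (Rep_ext _ _ _ (fun h => 0)).
      { intros h Hh. rewrite K11. change 2%nat with (2 * 1)%nat. rewrite (E_zero t0 t1 sx0 sy0 sx1 sy1 Hs He0 He1) by auto. field. }
      apply Rep_zero; zl.
    + apply (Hrec2 1%nat s); auto.
  - apply (Rep_ext _ _ _ (fun h => (/ INR d) * E t0 t1 (S r) (S q) h + (/ INR d * INR (S r)) * (h * K t0 t1 r q h))).
    { intros h Hh. rewrite K_rec1 by lra. subst d. field. apply not_0_INR; lia. }
    apply Rep_comb.
    + apply (E_rep t0 t1 sx0 sy0 sx1 sy1 He0 He1); zl.
    + apply Hh2. lia.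
Qed.


Lemma sqrt_h h : 0 < h -> sqrt h = u h * sqrt (1 + (u h)²).
Proof.
  intro Hh. assert (Hq : h = (u h)² * (1 + (u h)²)) by (rewrite <- (u_eq h Hh) at 1; unfold Rsqr; ring).
  rewrite Hq at 1.
  rewrite sqrt_mult_alt by apply Rle_0_sqr.
  rewrite sqrt_Rsqr by apply u_nonneg. reflexivity.
Qed.

Lemma cxA h : 0 < h -> sqrt h * cos (angA h) = u h.
Proof.
  intro Hh. unfold angA. rewrite cos_atan, sqrt_h by auto.
  assert (0 < sqrt (1 + (u h)²)) by (apply sqrt_lt_R0; pose proof (Rle_0_sqr (u h)); lra).
  field. lra.
Qed.
Lemma cyA h : 0 < h -> sqrt h * sin (angA h) = u h ^ 2.
Proof.
  intro Hh. unfold angA. rewrite sin_atan, sqrt_h by auto.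
  assert (0 < sqrt (1 + (u h)²)) by (apply sqrt_lt_R0; pose proof (Rle_0_sqr (u h)); lra).
  field. lra.
Qed.

Ltac ends := unfold cx, cy; intros h Hh;
  pose proof (cxA h Hh); pose proof (cyA h Hh); set (a := angA h) in *.

Lemma endA : forall h, 0 < h -> cx h (angA h) = 1 * u h /\ cy h (angA h) = 1 * u h ^ 2.
Proof. ends. split; lra. Qed.
Lemma endB : forall h, 0 < h -> cx h (- angA h) = 1 * u h /\ cy h (- angA h) = (-1) * u h ^ 2.
Proof. ends. rewrite cos_neg, sin_neg. split; lra. Qed.
Lemma endC : forall h, 0 < h -> cx h (- PI + angA h) = (-1) * u h /\ cy h (- PI + angA h) = (-1) * u h ^ 2.
Proof.
  ends. replace (- PI + a) with (a - PI) by ring. rewrite cos_minus, sin_minus, cos_PI, sin_PI.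
  split; nra.
Qed.
Lemma endD : forall h, 0 < h -> cx h (- PI - angA h) = (-1) * u h /\ cy h (- PI - angA h) = 1 * u h ^ 2.
Proof.
  ends. replace (- PI - a) with (- (a + PI)) by ring. rewrite cos_neg, sin_neg, cos_plus, sin_plus, cos_PI, sin_PI.
  split; nra.
Qed.
Lemma endA' : forall h, 0 < h -> cx h (- 2 * PI + angA h) = 1 * u h /\ cy h (- 2 * PI + angA h) = 1 * u h ^ 2.
Proof.
  ends. replace (- 2 * PI + a) with (a - 2 * PI) by ring. rewrite cos_minus, sin_minus, cos_2PI, sin_2PI.
  split; nra.
Qed.

Lemma I_arc (arc : R -> R * R) t0 t1 h : (forall h, arc h = (t0 h, t1 h)) ->
  on_arc arc (fun x y => x ^ 0 * y ^ 1) zero2 h = - K t0 t1 0 2 h.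
Proof.
  intro Ha. unfold on_arc, arc_int. rewrite Ha. simpl fst; simpl snd.
  replace (fun t => cx h t ^ 0 * cy h t ^ 1 * dcx h t + zero2 (cx h t) (cy h t) * dcy h t)
    with (fun t => (-1) * (cx h t ^ 0 * cy h t ^ 2) + 0 * (cx h t ^ 0 * cy h t ^ 2)).
  2:{ apply functional_extensionality. intro t. unfold zero2, dcx, cy. simpl. ring. }
  rewrite oint_RInt.
  - unfold K. rewrite RInt_lin2 by apply exR_XY. ring.
  - apply (@ex_RInt_continuous R_CompleteNormedModule). intros. apply cont_lin.
Qed.

Lemma ang_rep t0 t1 sx0 sy0 sx1 sy1 (F : R -> R) :
  (forall h, 0 < h -> cx h (t0 h) = sx0 * u h /\ cy h (t0 h) = sy0 * u h ^ 2) ->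
  (forall h, 0 < h -> cx h (t1 h) = sx1 * u h /\ cy h (t1 h) = sy1 * u h ^ 2) ->
  (forall h, 0 < h -> F h = - K t0 t1 0 2 h) -> Rep 0 3 F ->
  Rep 0 3 (fun h => h * (t1 h - t0 h)).
Proof.
  intros H0 H1 HF HR.
  apply (Rep_ext _ _ _ (fun h => (-2) * F h + 1 * E t0 t1 1 1 h)).
  - intros h Hh. rewrite HF by auto. rewrite K_rec2 by lra. rewrite K00. simpl. field.
  - apply Rep_comb; auto.
    apply (Rep_ext _ _ _ (fun h => (sx1 ^ 1 * sy1 ^ 1 - sx0 ^ 1 * sy0 ^ 1) * u h ^ (1 + 2 * 1))).
    + intros h Hh. unfold E. destruct (H0 h Hh) as [-> ->]. destruct (H1 h Hh) as [-> ->]. simpl. ring.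
    + apply Rep_mono; simpl; lia.
Qed.

Lemma I01_rep : Rep 0 3 (Iij 0 1).
Proof.
  exists (1 :: nil), nil, nil. unfold deg_le; simpl. repeat split; try lia.
  intros. ring.
Qed.
Lemma J01_rep : Rep 0 3 (Jij 0 1).
Proof.
  exists nil, (1 :: nil), nil. unfold deg_le; simpl. repeat split; try lia.
  intros. ring.
Qed.

Lemma angAB : Rep 0 3 (fun h => h * (- angA h - angA h)).
Proof.
  apply (ang_rep angA (fun h => - angA h) 1 1 1 (-1) (Iij 0 1) endA endB).
  - intros. unfold Iij. apply I_arc. reflexivity.
  - apply I01_rep.
Qed.
Lemma angBC : Rep 0 3 (fun h => h * ((- PI + angA h) - - angA h)).
Proof.
  apply (ang_rep (fun h => - angA h) (fun h => - PI + angA h) 1 (-1) (-1) (-1) (Jij 0 1) endB endC).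
  - intros. unfold Jij. apply I_arc. reflexivity.
  - apply J01_rep.
Qed.


Lemma pow_m1 n : ((3 + (-1) ^ Z.of_nat n) / 2 = 2 - Z.of_nat n mod 2)%Z.
Proof.
  destruct (Nat.Even_or_Odd n) as [[m ->]|[m ->]].
  - rewrite Nat2Z.inj_mul. rewrite Z.pow_mul_r by lia. simpl (Z.of_nat 2).
    replace ((-1) ^ 2)%Z with 1%Z by reflexivity. rewrite Z.pow_1_l by lia.
    Z.to_euclidean_division_equations; lia.
  - rewrite Nat2Z.inj_add, Nat2Z.inj_mul. rewrite Z.pow_add_r by lia. rewrite Z.pow_mul_r by lia.
    simpl (Z.of_nat 2). simpl (Z.of_nat 1).
    replace ((-1) ^ 2)%Z with 1%Z by reflexivity. rewrite Z.pow_1_l by lia.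
    Z.to_euclidean_division_equations; lia.
Qed.

Definition DA (n : nat) : Z := ((Z.of_nat n - 1) / 2)%Z.
Definition DP (n : nat) : Z := (2 * Z.of_nat n + (3 + (-1) ^ Z.of_nat n) / 2)%Z.

Lemma bounds n d : (1 <= d)%nat -> (d <= S n)%nat -> (bA d <= DA n)%Z /\ (bP d <= DP n)%Z.
Proof.
  intros. unfold DP, DA, bA, bP. rewrite pow_m1. split; Z.to_euclidean_division_equations; lia.
Qed.

Lemma arc_rep n (c d : nat -> nat -> R) (arc : R -> R * R) t0 t1 sx0 sy0 sx1 sy1 :
  (forall h, arc h = (t0 h, t1 h)) ->
  sx0 ^ 2 = 1 /\ sy0 ^ 2 = 1 /\ sx1 ^ 2 = 1 /\ sy1 ^ 2 = 1 ->
  (forall h, 0 < h -> cx h (t0 h) = sx0 * u h /\ cy h (t0 h) = sy0 * u h ^ 2) ->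
  (forall h, 0 < h -> cx h (t1 h) = sx1 * u h /\ cy h (t1 h) = sy1 * u h ^ 2) ->
  Rep 0 3 (fun h => h * (t1 h - t0 h)) ->
  Rep (DA n) (DP n) (fun h => on_arc arc (poly2 n c) (fun x y => - poly2 n d x y) h).
Proof.
  intros Ha Hs H0 H1 Hang.
  apply (Rep_ext _ _ _ (fun h => sum_f_R0 (fun i => sum_f_R0 (fun j =>
     (- c i j) * K t0 t1 i (S j) h + (- d i j) * K t0 t1 (S i) j h) (n - i)) n)).
  { intros. apply on_arc_sum. auto. }
  apply (Rep_sum _ _ (fun i h => sum_f_R0 (fun j =>
     (- c i j) * K t0 t1 i (S j) h + (- d i j) * K t0 t1 (S i) j h) (n - i))).
  intros i Hi.
  apply (Rep_sum _ _ (fun j h => (- c i j) * K t0 t1 i (S j) h + (- d i j) * K t0 t1 (S i) j h)).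
  intros j Hj.
  destruct (bounds n (i + S j)) as [B1 B2]; try lia.
  apply Rep_comb; apply (Rep_weak _ _ _ _ _ B1 B2);
    apply (K_rep t0 t1 sx0 sy0 sx1 sy1 Hs H0 H1 Hang); lia.
Qed.

Lemma sgn : 1 ^ 2 = 1 /\ 1 ^ 2 = 1 /\ 1 ^ 2 = 1 /\ (-1) ^ 2 = 1.
Proof. repeat split; ring. Qed.

Theorem lemma2p3 (n : nat) (a b : nat -> nat -> nat -> R) :
  (1 <= n)%nat ->
  exists (alpha beta gamma delta phi : list R),
    deg_le alpha ((Z.of_nat n - 1) / 2)%Z /\
    deg_le delta ((Z.of_nat n - 1) / 2)%Z /\
    deg_le beta ((Z.of_nat n - 2) / 2)%Z /\
    deg_le gamma (Z.of_nat n / 2)%Z /\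
    deg_le phi (2 * Z.of_nat n + (3 + (-1) ^ Z.of_nat n) / 2)%Z /\
    forall h : R, 0 < h ->
      M n a b h =
        peval alpha h * Iij 0 1 h + peval beta h * Iij 1 1 h
        + peval gamma h * Jij 0 0 h + peval delta h * Jij 0 1 h
        + peval phi (u h).
Proof.
  intro Hn.
  assert (R1 : Rep (DA n) (DP n) (fun h => on_arc arcAB (poly2 n (b 1%nat)) (fun x y => - poly2 n (a 1%nat) x y) h)).
  { apply (arc_rep n _ _ arcAB angA (fun h => - angA h) 1 1 1 (-1)); auto.
    - repeat split; ring.
    - apply endA. - apply endB. - apply angAB. }
  assert (R2 : Rep (DA n) (DP n) (fun h => on_arc arcBC (poly2 n (b 2%nat)) (fun x y => - poly2 n (a 2%nat) x y) h)).
  { apply (arc_rep n _ _ arcBC (fun h => - angA h) (fun h => - PI + angA h) 1 (-1) (-1) (-1)); auto.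
    - repeat split; ring.
    - apply endB. - apply endC. - apply angBC. }
  assert (R3 : Rep (DA n) (DP n) (fun h => on_arc arcCD (poly2 n (b 3%nat)) (fun x y => - poly2 n (a 3%nat) x y) h)).
  { apply (arc_rep n _ _ arcCD (fun h => - PI + angA h) (fun h => - PI - angA h) (-1) (-1) (-1) 1); auto.
    - repeat split; ring.
    - apply endC. - apply endD.
    - apply (Rep_ext _ _ _ _ (fun h _ => ltac:(ring) : h * ((- PI - angA h) - (- PI + angA h)) = h * (- angA h - angA h))).
      apply angAB. }
  assert (R4 : Rep (DA n) (DP n) (fun h => on_arc arcDA (poly2 n (b 4%nat)) (fun x y => - poly2 n (a 4%nat) x y) h)).
  { apply (arc_rep n _ _ arcDA (fun h => - PI - angA h) (fun h => - 2 * PI + angA h) (-1) 1 1 1); auto.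
    - repeat split; ring.
    - apply endD. - apply endA'.
    - apply (Rep_ext _ _ _ _ (fun h _ => ltac:(ring) : h * ((- 2 * PI + angA h) - (- PI - angA h)) = h * ((- PI + angA h) - - angA h))).
      apply angBC. }
  pose proof (Rep_add _ _ _ _ (Rep_add _ _ _ _ (Rep_add _ _ _ _ R1 R2) R3) R4) as RM.
  destruct RM as (al & de & ph & A1 & A2 & A3 & A4).
  exists al, nil, nil, de, ph.
  unfold DA, DP in *. repeat split; auto.
  - unfold deg_le; simpl. Z.to_euclidean_division_equations; lia.
  - unfold deg_le; simpl. Z.to_euclidean_division_equations; lia.
  - intros h Hh. transitivity (peval al h * Iij 0 1 h + peval de h * Jij 0 1 h + peval ph (u h)).
    + rewrite <- A4 by auto. unfold M. reflexivity.
    + simpl peval. ring.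
Qed.
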